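(* Let $\sigma$, $\nu$, $\alpha$ and $c$ be as in the second-order ergodic theorem for admissible substitutions (see context). Then for every $b\in\mathcal B$ and $\nu$-a.e. $x=(x_k)_{k\in\mathbb Z}\in X_\sigma$, $$\lim_{n\to\infty}\frac1{\log n}\sum_{1\le k\le n,\ x_k=b}\frac1{k^\alpha}=\alpha\cdot c\cdot\nu([b]).$$
   Context: $\mathcal A=\{1,\dots,N\}$, $\sigma:\mathcal A\to\mathcal A^+$ a substitution; $X_\sigma=\{x\in\mathcal A^{\mathbb Z}:x[-n,n]$ is a subword of some $\sigma^m(a)$, $m\ge1$, for all $n\ge 1\}$ with left shift $S$; $[b]=\{x:x_0=b\}$. $M_\sigma$ has $(a,b)$ entry the number of occurrences of $a$ in $\sigma(b)$. $\sigma$ is admissible if $M_\sigma=\begin{pmatrix}A&C\\0&B\end{pmatrix}$ (suitable ordering) with $A,B$ primitive, $C\ne0$, $\rho(A)>\rho(B)>1$, and, with $\mathcal B$ the letters indexing $B$: each $\sigma(b)$, $b\in\mathcal B$, begins and ends with a letter of $\mathcal B$, and for each $b\in\mathcal B$ some $\sigma^k(b)$ has a letter of $\mathcal B$ at a position other than first and last. $\nu$ is the unique (up to scaling) $\sigma$-finite infinite $S$-invariant measure on $X_\sigma$ with $0<\nu([b])<\infty$ for $b\in\mathcal B$, normalized by $\sum_{b\in\mathcal B}\xi_b\nu([b])=1$, where $\xi_i>0$ satisfy $|\sigma^k(i)|/(\xi_i\rho(A)^k)\to1$. $\alpha=\log\rho(B)/\log\rho(A)$, and $c>0$ is the constant of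 the second-order ergodic theorem: for every $f\in L^1(X_\sigma,\nu)$ and $\nu$-a.e. $x$, $\lim_{n\to\infty}\frac1{\log n}\sum_{k=1}^n\frac{\sum_{i=0}^{k-1}f(S^ix)}{c\,k^{\alpha+1}}=\int f\,d\nu$ (explicitly, $c=\gamma\delta$ with $\delta$ the a.e. value of the right average $\alpha$-dimensional density of $\mathcal H^\alpha$ on the graph-directed sets $K_b$ of the associated tile substitution and $\gamma^{-1}=\sum_{b\in\mathcal B}\nu([b])\mathcal H^\alpha(K_b)$). *)

(* Defs.v *)
From HB Require Import structures.
From mathcomp Require Import all_boot all_order all_algebra.
From mathcomp Require Import all_classical all_reals all_analysis.
From mathcomp Require Import complex.
Set Implicit Arguments. Unset Strict Implicit. Unset Printing Implicit Defensive.
Import Order.TTheory GRing.Theory Num.Theory numFieldNormedType.Exports.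
Local Open Scope ring_scope.
Local Open Scope classical_set_scope.

(** Alphabet: the letters are 'I_n.+1 (so N = n+1 letters, 0-indexed). *)

Definition subst_word (N : nat) (sigma : 'I_N -> seq 'I_N) (w : seq 'I_N) :
  seq 'I_N := flatten (map sigma w).

Definition subst_iter (N : nat) (sigma : 'I_N -> seq 'I_N) (k : nat)
  (w : seq 'I_N) : seq 'I_N := iter k (subst_word sigma) w.

Definition subst_matrix (N : nat) (sigma : 'I_N -> seq 'I_N) : 'M[nat]_N :=
  \matrix_(a, b) count_mem a (sigma b).

(** Principal block of M indexed by the letter set S (entries outside S x S
    are set to 0; its powers restricted to S are the powers of the block,
    and its nonzero spectrum is that of the block). *)
Definition restr_mx (N : nat) (S : {set 'I_N}) (M : 'M[nat]_N) : 'M[nat]_N :=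
  \matrix_(i, j) if (i \in S) && (j \in S) then M i j else 0%N.

Definition mxpow (N : nat) (M : 'M[nat]_N) (k : nat) : 'M[nat]_N :=
  iter k (mulmx M) 1%:M.

Definition primitive_on (N : nat) (S : {set 'I_N}) (M : 'M[nat]_N) : Prop :=
  exists k : nat, (0 < k)%N /\
    forall i j, i \in S -> j \in S -> (0 < mxpow (restr_mx S M) k i j)%N.

(** Spectral radius: largest modulus of a complex eigenvalue (a complex root
    of the characteristic polynomial); 0 for the empty matrix. *)
Definition spectral_radius (R : realType) (N : nat) (M : 'M[nat]_N) : R :=
  sup [set complex.ComplexField.Normc.normc z | z in
        [set z : complex.complex R |
           root (char_poly (map_mx (fun k : nat => k%:R : complex.complex R) M)) z]].

Definition rhoA (R : realType) (N : nat) (sigma : 'I_N -> seq 'I_N)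
  (Bset : {set 'I_N}) : R := spectral_radius R (restr_mx (~: Bset) (subst_matrix sigma)).
Definition rhoB (R : realType) (N : nat) (sigma : 'I_N -> seq 'I_N)
  (Bset : {set 'I_N}) : R := spectral_radius R (restr_mx Bset (subst_matrix sigma)).

Definition admissible (R : realType) (N : nat) (sigma : 'I_N -> seq 'I_N)
  (Bset : {set 'I_N}) : Prop :=
  let M := subst_matrix sigma in
  [/\
      forall a, sigma a != [::],
      (* lower-left block is zero *)
      forall a b, a \notin Bset -> b \in Bset -> M b a = 0%N,
      primitive_on (~: Bset) M /\ primitive_on Bset M &
      exists a b, [/\ a \notin Bset, b \in Bset & (0 < M a b)%N]] /\
  [/\
      1 < rhoB R sigma Bset < rhoA R sigma Bset,
      forall b, b \in Bset -> head b (sigma b) \in Bset /\ last b (sigma b) \in Bset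
    &
      forall b, b \in Bset -> exists k i,
        let w := subst_iter sigma k [:: b] in
        [/\ (0 < i)%N, (i < (size w).-1)%N & nth b w i \in Bset]].

Definition seqZ (n : nat) := int -> 'I_n.+1.
HB.instance Definition _ n := Choice.on (seqZ n).
HB.instance Definition _ n := isPointed.Build (seqZ n) (fun _ => ord0).
Definition cyls n : set (set (seqZ n)) :=
  [set A | exists i a, A = [set x : int -> 'I_n.+1 | x i = a]].
Definition shiftspace n := g_sigma_algebraType (@cyls n).

Definition Sshift n (x : shiftspace n) : shiftspace n :=
  fun i : int => (x : int -> 'I_n.+1) (i + 1).

Definition cyl0 n (b : 'I_n.+1) : set (shiftspace n) :=
  [set x | (x : int -> 'I_n.+1) 0 = b].

Definition central_word n (x : int -> 'I_n.+1) (m : nat) : seq 'I_n.+1 :=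
  [seq x (i%:Z - m%:Z) | i <- iota 0 (2 * m).+1].

Definition Xsigma n (sigma : 'I_n.+1 -> seq 'I_n.+1) : set (shiftspace n) :=
  [set x | forall m : nat, (0 < m)%N ->
     exists (k : nat) (a : 'I_n.+1), (0 < k)%N /\
       infix (central_word (x : int -> 'I_n.+1) m) (subst_iter sigma k [:: a])].

(* Main.v *)
Require Import Defs.
From HB Require Import structures.
From mathcomp Require Import all_boot all_order all_algebra.
From mathcomp Require Import all_classical all_reals all_analysis.
From mathcomp Require Import ring lra.
From mathcomp Require Import measurable_realfun.
Import Order.TTheory GRing.Theory Num.Theory numFieldNormedType.Exports.
Local Open Scope ring_scope.
Local Open Scope classical_set_scope.

Lemma bern (R : realType) (a y : R) : 0 <= a -> a <= 1 -> -1 < y ->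
  (1 + y) `^ a <= 1 + a * y.
Proof.
move=> a0 a1 y1.
have := @concave_ln R (Itv01 a0 a1) (1 + y) 1.
rewrite !convRE /= ln1 mulr0 addr0.
have y0 : 0 < 1 + y by lra.
move=> /(_ y0 ltr01).
have h : 0 < a * (1 + y) + (1 - a) * 1.
  have := mulr_ge0 a0 (ltW y0); have [->|] := eqVneq a 1; first by lra.
  move=> ha1 hh; have : a < 1 by rewrite lt_neqAle ha1. lra.
rewrite -ler_expR lnK ?posrE // => H.
rewrite /powR gt_eqF //. apply: (le_trans _ (le_trans H _)).
  by rewrite mulrC.
have -> : unstable.onem a = 1 - a by []. lra.
Qed.
Lemma key_up (R : realType) (α x p r : R) : 0 < α -> 0 < x -> 0 < p -> 1 <= r ->
  r <= 1 + α * x^-1 -> p^-1 - (p*r)^-1 <= α * (p*x)^-1.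
Proof.
move=> a0 x0 p0 r1 rle.
have r0 : 0 < r by lra.
rewrite !invfM.
have hp : p * p^-1 = 1 by rewrite divff // gt_eqF.
have hr : r * r^-1 = 1 by rewrite divff // gt_eqF.
have hx : x * x^-1 = 1 by rewrite divff // gt_eqF.
have := invr_gt0 p; have := invr_gt0 r; have := invr_gt0 x.
rewrite p0 r0 x0 => X0 Ri0 P0.
set P := p^-1 in hp P0 *; set Ri := r^-1 in hr Ri0 *; set X := x^-1 in hx X0 rle *.
have ri1 : Ri <= 1 by nra.
have : 1 - Ri <= α * X by nra.
nra.
Qed.

Lemma key_lo (R : realType) (α y q s : R) : 0 < y -> 0 < q -> 0 < s -> s <= 1 ->
  s <= 1 - α * y^-1 -> α * (q*y)^-1 <= (q*s)^-1 - q^-1.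
Proof.
move=> y0 q0 s0 s1 sle.
rewrite !invfM.
have hr : s * s^-1 = 1 by rewrite divff // gt_eqF.
have := invr_gt0 q; have := invr_gt0 s; have := invr_gt0 y.
rewrite q0 s0 y0 => Y0 Si0 Q0.
set Q := q^-1 in Q0 *; set Si := s^-1 in hr Si0 *; set Y := y^-1 in Y0 sle *.
have : α * Y <= Si - 1 by nra.
nra.
Qed.

Section K.
Variables (R : realType) (α : R).
Hypotheses (a0 : 0 < α) (a1 : α <= 1).
Definition gg (k : nat) : R := (k%:R `^ α)^-1.
Definition hh (k : nat) : R := (k%:R `^ (α + 1))^-1.

Lemma one_pw : (1:R) `^ α = 1. Proof. by rewrite powR1. Qed.

Lemma powS1 (x : R) : 0 < x -> x `^ (α + 1) = x `^ α * x.
Proof.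
move=> x0; rewrite powRD ?powRr1 ?ltW //.
by apply/implyP => _; rewrite gt_eqF.
Qed.

Lemma hh_gg k : (0 < k)%N -> k%:R * hh k = gg k.
Proof.
move=> k0; have x0 : (0:R) < k%:R by rewrite ltr0n.
rewrite /hh /gg powS1 // invfM mulrC -mulrA mulVf ?mulr1 // gt_eqF //.
Qed.

Lemma key_k k : (0 < k)%N -> α * hh k.+1 <= gg k - gg k.+1 <= α * hh k.
Proof.
move=> k0; have x0 : (0:R) < k%:R by rewrite ltr0n.
set x : R := k%:R in x0 *.
have x10 : (0:R) < k.+1%:R by rewrite ltr0n.
have ex : k.+1%:R = x + 1 :> R by rewrite -natr1.
apply/andP; split.
- rewrite /hh /gg powS1 // ex -/x.
  have y0 : 0 < x + 1 by lra.
  have hs : x = (x + 1) * (x / (x + 1)) by rewrite mulrC divfK // gt_eqF.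
  have e : x `^ α = (x + 1) `^ α * (x / (x + 1)) `^ α.
    by rewrite {1}hs powRM // ltW // divr_gt0.
  rewrite -/x e.
  apply: key_lo => //.
  + by apply: powR_gt0.
  + by apply: powR_gt0; apply: divr_gt0.
  + rewrite -[X in _ <= X](one_pw). apply: ge0_ler_powR; rewrite ?ltW ?nnegrE ?ltW ?divr_gt0 //.
    by rewrite ltr_pdivrMr // mul1r; lra.
  + have := @bern R α (- (x + 1)^-1) (ltW a0) a1.
    have -> : 1 + - (x + 1)^-1 = x / (x + 1).
      by apply/eqP; rewrite eq_sym -subr_eq0; apply/eqP; field; rewrite gt_eqF.
    rewrite mulrN. apply.
    rewrite ltrN2 invf_lt1 //; lra.
- rewrite /hh /gg powS1 // ex -/x.
  have hs : x + 1 = x * (1 + x^-1) by rewrite mulrDr mulr1 divff // gt_eqF.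
  have e : (x * (1 + x^-1)) `^ α = x `^ α * (1 + x^-1) `^ α.
    by rewrite powRM // ltW // addr_gt0 // invr_gt0.
  rewrite -/x hs e.
  apply: key_up => //.
  + by apply: powR_gt0.
  + have xi : 0 < x^-1 by rewrite invr_gt0.
    rewrite -[X in X <= _](one_pw). apply: ge0_ler_powR; rewrite ?nnegrE; try lra; exact: ltW.
  + apply: (@bern R α x^-1); first exact: ltW; first by [].
    by have := invr_gt0 x; rewrite x0; lra.
Qed.


Lemma pterm (a S k g g' h h' : R) : 0 <= a <= 1 -> 0 <= S <= k -> 0 <= h' ->
  α * h' <= g - g' <= α * h -> k * (h - h') = (g - g') + h' ->
  `|a * (g - g') + S * (g - g' - α * h)| <= (α + 2) * (g - g').
Proof.
move=> /andP[a0' a1'] /andP[S0 Sk] h0 /andP[l u] e.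
have d0 : 0 <= g - g' by have := mulr_ge0 (ltW a0) h0; lra.
have hh0 : 0 <= h - h'.
  by rewrite -(pmulr_rge0 _ a0) mulrBr; lra.
have t1 : 0 <= a * (g - g') <= g - g'.
  apply/andP; split; first exact: mulr_ge0.
  by rewrite -[X in _ <= X]mul1r ler_wpM2r.
have t2 : S * (g - g' - α * h) <= 0.
  by rewrite -oppr_ge0 -mulrN mulr_ge0 //; lra.
have t3 : S * (α * (h - h')) <= k * (α * (h - h')).
  apply: ler_wpM2r => //; apply: mulr_ge0 => //; exact: ltW.
have t4 : S * (g - g' - α * h) >= - (S * (α * (h - h'))).
  have q : 0 <= g - g' - α * h + α * (h - h') by lra.
  have := mulr_ge0 S0 q. lra.
rewrite ler_norml; apply/andP; split; nra.
Qed.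

Variable a : nat -> R.
Hypothesis a01 : forall i, 0 <= a i <= 1.
Definition SS k := \sum_(0 <= i < k) a i.
Definition DD N := \sum_(1 <= k < N.+1) SS k * hh k.
Definition AA N := \sum_(1 <= k < N.+1) a k * gg k.

Lemma SSS k : SS k.+1 = SS k + a k.
Proof. by rewrite /SS big_nat_recr. Qed.

Lemma SS_bnd k : 0 <= SS k <= k%:R.
Proof.
elim: k => [|k IH]; first by rewrite /SS big_geq // lexx.
rewrite SSS -natr1; have := a01 k; lra.
Qed.

Lemma SS_mono m n : (m <= n)%N -> SS m <= SS n.
Proof.
move=> /subnK <-; elim: (n - m)%N => [|d IH]; first by rewrite add0n.
rewrite addSn SSS; have := a01 (d + m)%N; lra.
Qed.

Lemma gg_ge0 k : 0 <= gg k.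
Proof. by rewrite /gg invr_ge0 powR_ge0. Qed.
Lemma hh_ge0 k : 0 <= hh k.
Proof. by rewrite /hh invr_ge0 powR_ge0. Qed.
Lemma gg1 : gg 1 = 1.
Proof. by rewrite /gg one_pw invr1. Qed.

Lemma mainbnd N : `|AA N - α * DD N - SS N.+1 * gg N.+1 + a 0| <= (α + 2) * (1 - gg N.+1).
Proof.
elim: N => [|N IH].
  rewrite /AA /DD !big_geq // SSS /SS big_geq // gg1.
  have -> : 0 - α * 0 - (0 + a 0) * 1 + a 0 = 0 by ring.
  by rewrite normr0 subrr mulr0.
have e : AA N.+1 - α * DD N.+1 - SS N.+2 * gg N.+2 + a 0 =
  (AA N - α * DD N - SS N.+1 * gg N.+1 + a 0) +
  (a N.+1 * (gg N.+1 - gg N.+2) + SS N.+1 * (gg N.+1 - gg N.+2 - α * hh N.+1)).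
  rewrite /AA /DD (big_nat_recr N.+1) // (big_nat_recr N.+1) // (SSS N.+1) /=.
  ring.
rewrite e.
have hk := @key_k N.+1 isT.
have hp := @pterm (a N.+1) (SS N.+1) (N.+1)%:R (gg N.+1) (gg N.+2) (hh N.+1) (hh N.+2)
  (a01 _) (SS_bnd _) (hh_ge0 _) hk.
have : (N.+1)%:R * (hh N.+1 - hh N.+2) = gg N.+1 - gg N.+2 + hh N.+2.
  have e1 := @hh_gg N.+1 isT. have e2 := @hh_gg N.+2 isT.
  rewrite -natr1 in e2. rewrite mulrBr e1. lra.
move=> /hp hp'.
apply: (le_trans (ler_normD _ _)). lra.
Qed.


Lemma hh_anti m n : (0 < m)%N -> (m <= n)%N -> hh n <= hh m.
Proof.
move=> m0 mn; rewrite /hh lef_pV2 ?posrE ?powR_gt0 ?ltr0n //; last exact: leq_trans mn.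
apply: ge0_ler_powR; rewrite ?nnegrE ?ler0n ?ler_nat //.
by apply: addr_ge0 => //; exact: ltW.
Qed.

Lemma hh2 N : hh N.*2.+2 = (2 `^ (α + 1))^-1 * hh N.+1.
Proof.
rewrite /hh -invfM -powRM ?ler0n //.
by rewrite -natrM mul2n doubleS.
Qed.

Lemma bndry N : SS N.+1 * gg N.+1 <= 2 `^ (α + 1) * (DD N.*2.+1 - DD N).
Proof.
have -> : DD N.*2.+1 - DD N = \sum_(N.+1 <= k < N.*2.+2) SS k * hh k.
  rewrite /DD (@big_cat_nat _ _ _ N.+1 1 N.*2.+2) //=; first by rewrite addrAC subrr add0r.
  by rewrite -addnn; apply: leq_trans (leq_addr N N) _.
have : \sum_(N.+1 <= k < N.*2.+2) (SS N.+1 * hh N.*2.+2) <= \sum_(N.+1 <= k < N.*2.+2) SS k * hh k.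
  apply: ler_sum_nat => k /andP[k1 k2].
  have /andP[s0 _] := SS_bnd N.+1.
  apply: ler_pM => //; first exact: hh_ge0; first exact: SS_mono.
  apply: hh_anti; [exact: leq_ltn_trans k1 | exact: ltnW].
rewrite sumr_const_nat hh2.
have -> : (N.*2.+2 - N.+1)%N = N.+1.
  by rewrite -addnn -addSn -addnS addnK.
have e := @hh_gg N.+1 isT.
have p2 : 0 < 2 `^ (α + 1) :> R by apply: powR_gt0.
rewrite -mulr_natr -e => H.
have p2i : 0 < (2 `^ (α + 1))^-1 :> R by rewrite invr_gt0.
rewrite -(ler_pM2l p2i).
rewrite !mul1r in H *.
rewrite mulKf ?gt_eqF //. apply: le_trans H. rewrite -mulr_natr.
by rewrite le_eqVlt; apply/orP; left; apply/eqP; ring.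
Qed.

Lemma lninv0 : (ln (N%:R : R))^-1 @[N --> \oo] --> (0:R).
Proof.
apply/cvgr0Pnorm_lt => e e0.
near=> N.
have hN : expR (e^-1) < N%:R.
  by near: N; apply: nbhs_infty_gtr.
have N0 : (0:R) < N%:R by apply: lt_trans hN; exact: expR_gt0.
have hl : e^-1 < ln N%:R.
  by rewrite -ltr_expR lnK // posrE.
have l0 : 0 < ln (N%:R : R) by apply: lt_trans hl; rewrite invr_gt0.
rewrite gtr0_norm ?invr_gt0 //.
by rewrite -(ltf_pV2 (x:=_)) ?posrE ?invr_gt0 // invrK.
Unshelve. all: end_near. Qed.

Lemma comp21 (u : nat -> R) (l : R) :
  u N @[N --> \oo] --> l -> u N.*2.+1 @[N --> \oo] --> l.
Proof.
move=> H.
have hf : (fun N => N.*2.+1) @ \oo --> \oo.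
  apply/cvgnyPge => A; exists A => // x /= Ax.
  by apply: leq_trans Ax _; rewrite -addnn -addnS leq_addr.
exact: (cvg_comp _ _ hf H).
Qed.

Lemma ratio1 :
  (ln ((N.*2.+1)%:R : R) / ln (N%:R : R)) @[N --> \oo] --> (1:R).
Proof.
have h3 : (1 + ln (3:R) * (ln (N%:R : R))^-1) @[N --> \oo] --> (1:R).
  rewrite -[X in _ --> X]addr0 -[X in _ + X](mulr0 (ln (3:R))).
  apply: cvgD; first exact: cvg_cst.
  apply: cvgMr. exact: lninv0.
have := @squeeze_cvgr _ _ _ _ _ _ (fun N => ln ((N.*2.+1)%:R : R) / ln (N%:R : R)) _ _ (cvg_cst (1:R)) h3.
apply.
near=> N.
have N2 : (2:R) <= N%:R by near: N; apply: nbhs_infty_ger.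
have N0 : (0:R) < N%:R by lra.
have l0 : 0 < ln (N%:R : R) by apply: ln_gt0; lra.
have lo : ln (N%:R : R) <= ln (N.*2.+1)%:R.
  rewrite ler_ln ?posrE ?ltr0n //; last by rewrite -(ltr0n R).
  by rewrite ler_nat; apply: leq_trans (leq_addr N N) _; rewrite addnn.
have hi : ln ((N.*2.+1)%:R : R) <= ln 3 + ln N%:R.
  have p3 : (0:R) < 3 by [].
  rewrite -lnM ?posrE //.
  rewrite ler_ln ?posrE ?ltr0n ?mulr_gt0 //.
  rewrite -[X in X <= _]natr1 -addnn natrD; lra.
apply/andP; split.
  by rewrite ler_pdivlMr // mul1r.
rewrite ler_pdivrMr // mulrDl mul1r -mulrA mulVf ?gt_eqF // mulr1; lra.
Unshelve. all: end_near. Qed.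

Lemma seq_main (c L : R) : 0 < c ->
  ((ln N%:R)^-1 * \sum_(1 <= k < N.+1) (\sum_(0 <= i < k) a i) / (c * k%:R `^ (α + 1)))
     @[N --> \oo] --> L ->
  ((ln N%:R)^-1 * AA N) @[N --> \oo] --> α * c * L.
Proof.
move=> c0 H.
pose Q N := (ln (N%:R : R))^-1 * DD N.
have hQ : Q N @[N --> \oo] --> c * L.
  have -> : Q = (fun N => c * ((ln (N%:R : R))^-1 * \sum_(1 <= k < N.+1) (\sum_(0 <= i < k) a i) / (c * k%:R `^ (α + 1)))).
    apply/funext => N; rewrite /Q /DD mulrCA; congr (_ * _).
    rewrite mulr_sumr; apply: eq_bigr => k _.
    by rewrite /hh /SS invfM mulrCA (mulrA c) mulfV ?gt_eqF // mul1r.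
  exact: (cvgMl_tmp H).
pose X N := Q N.*2.+1 * (ln ((N.*2.+1)%:R : R) / ln (N%:R : R)).
have hX : X N @[N --> \oo] --> c * L.
  rewrite -[X in _ --> X]mulr1; apply: cvgM; [exact: comp21 | exact: ratio1].
pose B N := (α + 3) * (ln (N%:R : R))^-1 + 2 `^ (α + 1) * (X N - Q N).
have hB : B N @[N --> \oo] --> (0:R).
  have -> : (0:R) = (α + 3) * 0 + 2 `^ (α + 1) * (c * L - c * L) by rewrite subrr !mulr0 addr0.
  apply: cvgD; first by apply: cvgMr; exact: lninv0.
  by apply: cvgMr; apply: cvgB.
have hE : ((ln (N%:R : R))^-1 * (AA N - α * DD N)) @[N --> \oo] --> (0:R).
  apply: (squeeze_cvgr (f := fun N => - B N) (h := B)); last exact: hB; last first.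
    by rewrite -oppr0; apply: cvgN.
  near=> N.
  have N2 : (2:R) <= N%:R by near: N; apply: nbhs_infty_ger.
  have l0 : 0 < ln (N%:R : R) by apply: ln_gt0; lra.
  have l1 : 0 < ln ((N.*2.+1)%:R : R).
    apply: ln_gt0; rewrite -natr1 -addnn natrD; lra.
  have eX : X N = (ln (N%:R : R))^-1 * DD N.*2.+1.
    rewrite /X /Q; field; rewrite ?gt_eqF //.
  have hm := mainbnd N.
  have hb := bndry N.
  have g0 := gg_ge0 N.+1.
  have := a01 0. move=> /andP[a00 a01'].
  have hS : 0 <= SS N.+1 * gg N.+1 by apply: mulr_ge0 => //; case/andP: (SS_bnd N.+1).
  have habs : `|AA N - α * DD N| <= (α + 3) + 2 `^ (α + 1) * (DD N.*2.+1 - DD N).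
    move: hm; rewrite ler_norml => /andP[hm1 hm2].
    have : (α + 2) * (1 - gg N.+1) <= α + 2.
      rewrite -[X in _ <= X]mulr1 ler_wpM2l //; first by apply: addr_ge0 => //; exact: ltW.
      lra.
    move=> hq; rewrite ler_norml; apply/andP; split.
    + have : 0 <= 2 `^ (α + 1) * (DD N.*2.+1 - DD N) by apply: le_trans hb.
      lra.
    + lra.
  have li : 0 < (ln (N%:R : R))^-1 by rewrite invr_gt0.
  have : `|(ln (N%:R : R))^-1 * (AA N - α * DD N)| <= B N.
    rewrite normrM gtr0_norm // /B eX /Q.
    have -> : (α + 3) * (ln (N%:R : R))^-1 +
       2 `^ (α + 1) * ((ln (N%:R : R))^-1 * DD N.*2.+1 - (ln (N%:R : R))^-1 * DD N)
       = (ln (N%:R : R))^-1 * ((α + 3) + 2 `^ (α + 1) * (DD N.*2.+1 - DD N)) by ring.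
    by rewrite ler_pM2l.
  by rewrite ler_norml.
have -> : (fun N => (ln (N%:R : R))^-1 * AA N) =
  (fun N => α * Q N + (ln (N%:R : R))^-1 * (AA N - α * DD N)).
  by apply/funext => N; rewrite /Q; ring.
rewrite -mulrA -[X in _ --> X]addr0.
apply: cvgD; [exact: cvgMr | exact: hE].
Unshelve. all: end_near. Qed.
End K.

Lemma alpha_bounds (R : realType) (x y : R) : 1 < x -> x < y ->
  0 < ln x / ln y /\ ln x / ln y <= 1.
Proof.
move=> x1 xy.
have lB : 0 < ln x by apply: ln_gt0.
have y0 : 0 < y by apply: lt_trans xy; apply: lt_trans x1.
have lA : ln x < ln y by rewrite ltr_ln ?posrE //; apply: lt_trans x1.
have lA0 : 0 < ln y by apply: lt_trans lA.
split; first by rewrite divr_gt0.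
by rewrite ler_pdivrMr ?mul1r ?ltW.
Qed.

Lemma iterS n (x : shiftspace n) i (j : int) :
  (iter i (@Sshift n) x : int -> 'I_n.+1) j = (x : int -> 'I_n.+1) (j + i%:Z).
Proof.
elim: i j => [|i IH] j /=; first by rewrite addr0.
by rewrite /Sshift IH -addrA intS.
Qed.

Lemma cyl0_meas n (b : 'I_n.+1) : measurable (cyl0 b).
Proof.
apply: sub_gen_smallest; exists 0, b; apply/funext => y; rewrite /cyl0 //.
Qed.

Theorem mainTheorem12 (R : realType) (n : nat)
  (sigma : 'I_n.+1 -> seq 'I_n.+1) (Bset : {set 'I_n.+1})
  (nu : {measure set (shiftspace n) -> \bar R})
  (xi : 'I_n.+1 -> R) (c : R) :
  (* sigma is admissible, B indexed by Bset *)
  admissible R sigma Bset ->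
  (* the constants xi_i *)
  (forall i, 0 < xi i) ->
  (forall i, ((size (subst_iter sigma k [:: i]))%:R
                             / (xi i * rhoA R sigma Bset ^+ k) : R) @[k --> \oo] --> (1 : R)) ->
  (* nu: a sigma-finite, infinite, S-invariant measure on X_sigma with
     0 < nu([b]) < oo for b in B, normalized by sum_b xi_b nu([b]) = 1 *)
  nu (~` Xsigma sigma) = 0%E ->
  sigma_finite setT nu ->
  nu setT = +oo%E ->
  (forall E, measurable E -> nu (@Sshift n @^-1` E) = nu E) ->
  (forall b, b \in Bset -> (0 < nu (cyl0 b))%E /\ (nu (cyl0 b) < +oo)%E) ->
  (\sum_(b in Bset) (xi b)%:E * nu (cyl0 b))%E = 1%E ->
  (* c > 0 is the constant of the second-order ergodic theorem *)
  let alpha := ln (rhoB R sigma Bset) / ln (rhoA R sigma Bset) in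
  0 < c ->
  (forall f : shiftspace n -> R, nu.-integrable setT (EFin \o f) ->
     {ae nu, forall x,
        ((ln N%:R)^-1 *
           \sum_(1 <= k < N.+1)
              (\sum_(0 <= i < k) f (iter i (@Sshift n) x)) / (c * k%:R `^ (alpha + 1)) : R)
        @[N --> \oo] --> fine (\int[nu]_y (f y)%:E)}) ->
  (* conclusion *)
  forall b, b \in Bset ->
    {ae nu, forall x : shiftspace n,
       ((ln N%:R)^-1 *
          \sum_(1 <= k < N.+1 | (x : int -> 'I_n.+1) k%:Z == b) (k%:R `^ alpha)^-1 : R)
       @[N --> \oo] --> alpha * c * fine (nu (cyl0 b))}.
Proof.
move=> [_ [/andP[rB rBA] _ _]] _ _ _ _ _ _ hfin _ alpha c0 Herg b bB.
have [al0 al1] : 0 < alpha /\ alpha <= 1 := @alpha_bounds R _ _ rB rBA.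
pose f : shiftspace n -> R := \1_(cyl0 b).
have mb := @cyl0_meas n b.
have fint : nu.-integrable setT (EFin \o f).
  apply/integrableP; split.
    by apply/measurable_EFinP; apply: measurable_indic.
  rewrite (eq_integral (fun x => (\1_(cyl0 b) x)%:E)); last first.
    move=> t _; rewrite /= /f indicE; case: (_ \in _) => /=.
      by rewrite normr1.
    by rewrite normr0.
  by rewrite integral_indic // setIT; case: (hfin b bB).
have hint : fine (\int[nu]_y (f y)%:E) = fine (nu (cyl0 b)).
  by rewrite integral_indic // setIT.
apply: filterS (Herg f fint) => x.
rewrite hint.
pose a i := f (iter i (@Sshift n) x).
have a01 : forall i, 0 <= a i <= 1.
  by move=> i; rewrite /a /f indicE; case: (_ \in _); rewrite ?lexx ?ler01.
move=> H.
have := @seq_main R alpha al0 al1 a a01 c _ c0 H.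
have ea : forall k, a k = ((x : int -> 'I_n.+1) k%:Z == b)%:R.
  move=> k; rewrite /a /f indicE.
  have -> : (iter k (@Sshift n) x \in cyl0 b) = ((x : int -> 'I_n.+1) k%:Z == b).
    apply/idP/idP.
      by move/set_mem; rewrite /cyl0 /= iterS add0r => ->.
    by move/eqP => h; apply/mem_set; rewrite /cyl0 /= iterS add0r.
  by [].
move=> Hs.
rewrite (_ : (fun N => _) = (fun N => (ln (N%:R : R))^-1 * AA R alpha a N)) //.
apply/funext => N; congr (_ * _).
rewrite /AA big_mkcond /=; apply: eq_bigr => k _.
by rewrite ea /gg; case: (_ == _); rewrite ?mul1r ?mul0r.
Qed.
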